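(* On a consistent L$^2$TS $(S,L,\to)$, the relations $\approx_L$ and $=_T^{\lambda}$ coincide: for all $s,t\in S$, $s\approx_L t$ iff $s=_T^{\lambda}t$.
   Context: Fix a set $\mathrm{Act}$ of actions containing a special action $\tau$ and a set $\mathbf{AP}$ of atomic propositions. An L$^2$TS is a triple $(S,L,\to)$ with $L:S\to\mathcal{P}(\mathbf{AP})$ and $\to\subseteq S\times\mathrm{Act}\times S$. It is consistent if (i) $s\xrightarrow{a}t$ implies ($L(s)=L(t)$ iff $a=\tau$); (ii) $s\xrightarrow{a}t$, $s'\xrightarrow{a}t'$ and $L(s)=L(s')$ imply $L(t)=L(t')$; (iii) $s\xrightarrow{a}t$, $s'\xrightarrow{b}t'$, $L(s)=L(s')$ and $L(t)=L(t')$ imply $a=b$. Its associated Kripke structure is $(S,L,\{(s,t)\mid\exists a.\ s\xrightarrow{a}t\})$ and its associated LTS is $(S,\to)$. In the associated Kripke structure, paths are sequences of states $s_0,s_1,\dots$ with consecutive states related, maximal if infinite or ending in a state without successor; $L(\pi)$ is obtained from $L(s_0),L(s_1),\dots$ by contracting maximal (finite or infinite) blocks of equal consecutive entries to one entry; $s\approx_L t$ iff $s$ and $t$ have the same sets $\{L(\pi)\mid\pi$ a maximal path from the state$\}$. In the associated LTS, paths are alternating sequences $s_0,a_1,s_1,\dots$ with $s_{k-1}\xrightarrow{a_k}s_k$, maximal if infinite or ending in a state without outgoing transitions. With the trivial colouring $\mathbf{T}$ assigning a single colour $C$ to every state, $\mathbf{T}(\pi)$ is obtained from $C,a_1,C,a_2,\dots$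 by contracting every finite maximal consecutive subsequence $C,\tau,C,\dots,\tau,C$ and every infinite one $C,\tau,C,\tau,\dots$ to $C$; these are complete $\mathbf{T}$-coloured traces of $s$ when $\pi$ is a maximal path from $s$. On the L$^2$TS, $s=_T^{\lambda}t$ means $L(s)=L(t)$ and $s,t$ have the same complete $\mathbf{T}$-coloured traces in the associated LTS. *)

(* Defs.v *)
Set Implicit Arguments.

(* Possibly-infinite sequences are encoded as  nat -> option X ;
   a maximal finite sequence of length n has entries Some _ at 0..n-1 and
   None from n on. *)

Section L2TS.
Variables (St Act AP : Type) (tau : Act).
Variable L : St -> (AP -> Prop).
Variable step : St -> Act -> St -> Prop.

Definition consistent : Prop :=
  (forall s a t, step s a t -> (L s = L t <-> a = tau)) /\
  (forall s a t s' t', step s a t -> step s' a t' -> L s = L s' -> L t = L t') /\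
  (forall s a t s' b t', step s a t -> step s' b t' -> L s = L s' -> L t = L t' -> a = b).

Definition kr (x y : St) : Prop := exists a, step x a y.

Definition kripke_maxpath (s : St) (p : nat -> option St) : Prop :=
  p 0 = Some s /\
  (forall k, p k = None -> p (S k) = None) /\
  (forall k x y, p k = Some x -> p (S k) = Some y -> kr x y) /\
  (forall k x, p k = Some x -> p (S k) = None -> forall y, ~ kr x y).

(* w is obtained from v by contracting every maximal (finite or infinite)
   block of equal consecutive entries to one entry; f k is the index in w of
   the block containing position k of v. *)
Definition stutter_contract {X : Type} (v w : nat -> option X) : Prop :=
  exists f : nat -> nat,
    f 0 = 0 /\
    (forall k, v (S k) = v k -> f (S k) = f k) /\
    (forall k, v (S k) <> v k -> f (S k) = S (f k)) /\
    (forall j x, w j = Some x <-> exists k, f k = j /\ v k = Some x).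

Definition label_trace (p : nat -> option St) (w : nat -> option (AP -> Prop)) : Prop :=
  stutter_contract (fun k => option_map L (p k)) w.

Definition label_traces (s : St) (w : nat -> option (AP -> Prop)) : Prop :=
  exists p, kripke_maxpath s p /\ label_trace p w.

Definition approx_L (s t : St) : Prop :=
  forall w, label_traces s w <-> label_traces t w.

(* A path s_0, a_1, s_1, a_2, ... is given by states p and actions acts, where
   acts k is the action a_{k+1} of the step p k --> p (S k). *)
Definition lts_maxpath (s : St) (p : nat -> option St) (acts : nat -> Act) : Prop :=
  p 0 = Some s /\
  (forall k, p k = None -> p (S k) = None) /\
  (forall k x y, p k = Some x -> p (S k) = Some y -> step x (acts k) y) /\
  (forall k x, p k = Some x -> p (S k) = None -> forall a y, ~ step x a y).

(* The trivial colouring T with a single colour C := tt.  Entries of coloured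
   sequences are inl C (a colour) or inr a (an action). *)
Definition Colour := unit.
Definition C : Colour := tt.

(* the sequence C, a_1, C, a_2, ... of a path *)
Definition coloured_seq (p : nat -> option St) (acts : nat -> Act)
  : nat -> option (Colour + Act) :=
  fun i =>
    if Nat.even i then
      match p (Nat.div2 i) with Some _ => Some (inl C) | None => None end
    else
      match p (S (Nat.div2 i)) with Some _ => Some (inr (acts (Nat.div2 i))) | None => None end.

(* w is obtained from u by contracting every maximal finite subsequence
   C,tau,C,...,tau,C and every infinite one C,tau,C,tau,... to C:
   f i is the index in w of the block containing position i of u; positions
   i and i+1 lie in the same block iff one of them is a tau. *)
Definition tau_contract (u w : nat -> option (Colour + Act)) : Prop :=
  exists f : nat -> nat,
    f 0 = 0 /\
    (forall i, (u (S i) = Some (inr tau) \/ u i = Some (inr tau)) -> f (S i) = f i) /\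
    (forall i, ~ (u (S i) = Some (inr tau) \/ u i = Some (inr tau)) -> f (S i) = S (f i)) /\
    (forall j x, w j = Some x <-> exists i, f i = j /\ u i = Some x /\ x <> inr tau).

Definition complete_T_traces (s : St) (w : nat -> option (Colour + Act)) : Prop :=
  exists p acts, lts_maxpath s p acts /\ tau_contract (coloured_seq p acts) w.

Definition eqT_lambda (s t : St) : Prop :=
  L s = L t /\ (forall w, complete_T_traces s w <-> complete_T_traces t w).

End L2TS.

(* Main.v *)
Require Import Defs.
From Stdlib Require Import Arith Lia ClassicalEpsilon FunctionalExtensionality Classical.

Lemma even_div2_double k : Nat.even (2*k) = true /\ Nat.div2 (2*k) = k.
Proof.
  induction k as [|k IH]. - split; reflexivity.
  - replace (2*S k) with (S (S (2*k))) by lia.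
    change (Nat.even (2*k) = true /\ S (Nat.div2 (2*k)) = S k).
    destruct IH as [A B]. rewrite A, B. auto.
Qed.

Lemma odd_div2_double k : Nat.even (S (2*k)) = false /\ Nat.div2 (S (2*k)) = k.
Proof.
  induction k as [|k IH]. - split; reflexivity.
  - replace (S (2*S k)) with (S (S (S (2*k)))) by lia.
    change (Nat.even (S (2*k)) = false /\ S (Nat.div2 (S (2*k))) = S k).
    destruct IH as [A B]. rewrite A, B. auto.
Qed.

Lemma cs_even {St Act} (p : nat -> option St) (acts : nat -> Act) k :
  coloured_seq p acts (2*k) = match p k with Some _ => Some (inl C) | None => None end.
Proof. unfold coloured_seq. destruct (even_div2_double k) as [A B]. rewrite A, B. reflexivity. Qed.

Lemma cs_odd {St Act} (p : nat -> option St) (acts : nat -> Act) k :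
  coloured_seq p acts (S (2*k)) =
  match p (S k) with Some _ => Some (inr (acts k)) | None => None end.
Proof. unfold coloured_seq. destruct (odd_div2_double k) as [A B]. rewrite A, B. reflexivity. Qed.

Lemma none_after {St} (p : nat -> option St) :
  (forall k, p k = None -> p (S k) = None) ->
  forall k d, p k = None -> p (d + k) = None.
Proof. intros H k d Hk; induction d; simpl; auto. Qed.

Lemma some_before {St} (p : nat -> option St) : (forall k, p k = None -> p (S k) = None) ->
  forall k k', k <= k' -> p k' <> None -> p k <> None.
Proof.
  intros H k k' Hle Hk' Hk. apply Hk'. replace k' with ((k'-k)+k) by lia.
  apply none_after; auto.
Qed.

Lemma stut_f_step {X} (v : nat -> option X) (f : nat -> nat) :
  (forall k, v (S k) = v k -> f (S k) = f k) ->
  (forall k, v (S k) <> v k -> f (S k) = S (f k)) ->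
  forall k, f (S k) = f k \/ f (S k) = S (f k).
Proof. intros H1 H2 k. destruct (classic (v (S k) = v k)); [left|right]; auto. Qed.

Lemma first_reach (f : nat -> nat) : f 0 = 0 ->
  (forall k, f (S k) = f k \/ f (S k) = S (f k)) ->
  forall k' m, f k' = S m -> exists k, k < k' /\ f k = m /\ f (S k) = S m.
Proof.
  intros H0 Hs k'. induction k' as [|k' IH]; intros m Hm.
  - congruence.
  - destruct (Hs k') as [E|E].
    + rewrite E in Hm. destruct (IH m Hm) as [k [? [? ?]]]. exists k; repeat split; auto; lia.
    + exists k'. repeat split; lia.
Qed.

Fixpoint sfun {X} (v : nat -> option X) (k : nat) : nat :=
  match k with 0 => 0
  | S k => if excluded_middle_informative (v (S k) = v k) then sfun v k else S (sfun v k) end.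

Lemma sfun_mono {X} (v : nat -> option X) k d : sfun v k <= sfun v (d + k).
Proof.
  induction d; simpl; auto. destruct (excluded_middle_informative _); lia.
Qed.

Lemma sfun_block {X} (v : nat -> option X) k1 k2 : sfun v k1 = sfun v k2 -> v k1 = v k2.
Proof.
  assert (G: forall k d, sfun v (d + k) = sfun v k -> v (d + k) = v k).
  { intros k d; induction d as [|d IH]; intros H; auto.
    simpl in H |- *. destruct (excluded_middle_informative (v (S (d + k)) = v (d + k))) as [E|E].
    - rewrite E. auto.
    - pose proof (sfun_mono v k d). lia. }
  intros H. destruct (le_ge_dec k1 k2).
  - replace k2 with ((k2-k1)+k1) in * by lia. symmetry. apply G; auto.
  - replace k1 with ((k1-k2)+k2) in * by lia. apply G; auto.
Qed.

Lemma stut_exists {X} (v : nat -> option X) : exists w, stutter_contract v w.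
Proof.
  exists (fun j => match excluded_middle_informative (exists k, sfun v k = j /\ v k <> None) with
    | left H => v (proj1_sig (constructive_indefinite_description _ H))
    | right _ => None end).
  exists (sfun v). split; [reflexivity|]. split.
  { intros k E; simpl. destruct (excluded_middle_informative _); tauto. }
  split.
  { intros k E; simpl. destruct (excluded_middle_informative _); tauto. }
  intros j x. destruct (excluded_middle_informative _) as [H|H].
  - destruct (constructive_indefinite_description _ H) as [k' [Hk' Hn]]; simpl.
    split.
    + intros E. exists k'. auto.
    + intros [k [Hk E]]. rewrite <- E. apply sfun_block. congruence.
  - split; [discriminate|]. intros [k [Hk E]]. exfalso. apply H. exists k.
    split; auto. congruence.
Qed.

Definition taucond {Act} (tau : Act) (u : nat -> option (Colour + Act)) i : Prop :=
  u (S i) = Some (inr tau) \/ u i = Some (inr tau).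

Fixpoint gfun {Act} (tau : Act) (u : nat -> option (Colour + Act)) (i : nat) : nat :=
  match i with 0 => 0
  | S i => if excluded_middle_informative (taucond tau u i) then gfun tau u i
           else S (gfun tau u i) end.

Lemma gfun_t {Act} (tau : Act) u i : taucond tau u i -> gfun tau u (S i) = gfun tau u i.
Proof. intros H; simpl; destruct (excluded_middle_informative _); tauto. Qed.
Lemma gfun_n {Act} (tau : Act) u i : ~ taucond tau u i -> gfun tau u (S i) = S (gfun tau u i).
Proof. intros H; simpl; destruct (excluded_middle_informative _); tauto. Qed.

Lemma tc_det {Act} (tau : Act) u w1 w2 : tau_contract tau u w1 -> tau_contract tau u w2 -> w1 = w2.
Proof.
  intros [f1 [A1 [B1 [C1 D1]]]] [f2 [A2 [B2 [C2 D2]]]].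
  assert (Ef: forall i, f1 i = f2 i).
  { induction i. congruence. destruct (classic (taucond tau u i)) as [T|T].
    - rewrite (B1 i T), (B2 i T). auto.
    - rewrite (C1 i T), (C2 i T). auto. }
  apply functional_extensionality. intros j.
  destruct (w1 j) as [a|] eqn:E1.
  - apply D1 in E1. destruct E1 as [i [Hi R]]. symmetry. apply D2. exists i. rewrite <- Ef. auto.
  - destruct (w2 j) as [b|] eqn:E2; auto.
    apply D2 in E2. destruct E2 as [i [Hi R]]. rewrite <- E1. apply D1. exists i. rewrite Ef. auto.
Qed.

Section Pf.
Variables (St Act AP : Type) (tau : Act) (L : St -> (AP -> Prop)) (step : St -> Act -> St -> Prop).
Hypothesis Hc : consistent tau L step.

Definition pick (l1 l2 : AP -> Prop) : Act :=
  epsilon (inhabits tau) (fun a => exists x y, step x a y /\ L x = l1 /\ L y = l2).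

Lemma pick_spec x a y : step x a y -> pick (L x) (L y) = a.
Proof.
  intros H. unfold pick.
  destruct (epsilon_spec (inhabits tau) (fun a => exists x' y', step x' a y' /\ L x' = L x /\ L y' = L y))
    as [x' [y' [S' [E1 E2]]]].
  { exists a, x, y. auto. }
  destruct Hc as [_ [_ H3]]. eapply H3; eauto.
Qed.

Definition Phi (w : nat -> option (AP -> Prop)) : nat -> option (Colour + Act) :=
  fun i => if Nat.even i then match w (Nat.div2 i) with Some _ => Some (inl C) | None => None end
   else match w (Nat.div2 i), w (S (Nat.div2 i)) with
        | Some l1, Some l2 => Some (inr (pick l1 l2)) | _, _ => None end.

Lemma Phi_even w m : Phi w (2*m) = match w m with Some _ => Some (inl C) | None => None end.
Proof. unfold Phi. destruct (even_div2_double m) as [A B]. rewrite A, B. reflexivity. Qed.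
Lemma Phi_odd w m : Phi w (S (2*m)) = match w m, w (S m) with
        | Some l1, Some l2 => Some (inr (pick l1 l2)) | _, _ => None end.
Proof. unfold Phi. destruct (odd_div2_double m) as [A B]. rewrite A, B. reflexivity. Qed.

Lemma stut_step (p : nat -> option St) (w : nat -> option (AP -> Prop)) f :
  (forall k, p k = None -> p (S k) = None) ->
  f 0 = 0 ->
  (forall k, option_map L (p (S k)) = option_map L (p k) -> f (S k) = f k) ->
  (forall k, option_map L (p (S k)) <> option_map L (p k) -> f (S k) = S (f k)) ->
  (forall j x, w j = Some x <-> exists k, f k = j /\ option_map L (p k) = Some x) ->
  forall m l', w (S m) = Some l' ->
  exists k x y, f k = m /\ f (S k) = S m /\ p k = Some x /\ p (S k) = Some y /\
     w m = Some (L x) /\ l' = L y /\ L x <> L y.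
Proof.
  intros Hp H0 H1 H2 H4 m l' Hw.
  pose proof Hw as Hw'.
  apply H4 in Hw. destruct Hw as [k' [Hk' Hv]].
  destruct (first_reach f H0 (stut_f_step _ f H1 H2) k' m Hk') as [k [Hlt [Hf1 Hf2]]].
  destruct (p (S k)) as [y|] eqn:Ey.
  2:{ exfalso. apply (some_before p Hp (S k) k'); [lia| |exact Ey].
      intro E; rewrite E in Hv; discriminate. }
  destruct (p k) as [x|] eqn:Ex.
  2:{ rewrite (Hp k Ex) in Ey; discriminate. }
  exists k, x, y. repeat split; auto.
  - apply H4. exists k. rewrite Ex. auto.
  - assert (w (S m) = Some (L y)) as E. { apply H4. exists (S k). rewrite Ey. auto. }
    congruence.
  - intro E. assert (f (S k) = f k). { apply H1. rewrite Ex, Ey. simpl. rewrite E. reflexivity. }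
    lia.
Qed.

Lemma L0 p s w : p 0 = Some s -> label_trace L p w -> w 0 = Some (L s).
Proof.
  intros Hs [f [H0 [_ [_ H4]]]]. apply H4. exists 0. rewrite Hs. auto.
Qed.

Lemma D s p acts w : lts_maxpath step s p acts -> label_trace L p w ->
  tau_contract tau (coloured_seq p acts) (Phi w).
Proof.
  intros [Hp0 [HpN [Hst Hend]]] [f [Hf0 [Hf1 [Hf2 Hf4]]]].
  set (u := coloured_seq p acts).
  destruct Hc as [Hc1 [Hc2 Hc3]].
  assert (QQ: forall k x y, p k = Some x -> p (S k) = Some y -> gfun tau u (2*k) = 2 * f k ->
     (L x = L y -> gfun tau u (S (2*k)) = 2 * f k) /\
     (L x <> L y -> gfun tau u (S (2*k)) = S (2 * f k))).
  { intros k x y Ex Ey Hg. pose proof (Hst k x y Ex Ey) as Hs.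
    assert (U1: u (S (2*k)) = Some (inr (acts k))) by (unfold u; rewrite cs_odd, Ey; auto).
    assert (U0: u (2*k) = Some (inl C)) by (unfold u; rewrite cs_even, Ex; auto).
    split; intros E.
    - rewrite gfun_t; auto. left. rewrite U1. apply (proj1 (Hc1 _ _ _ Hs)) in E. rewrite E. auto.
    - rewrite gfun_n; [rewrite Hg; auto|]. intros [T|T].
      + rewrite U1 in T. injection T; intros T'. apply E. apply (Hc1 _ _ _ Hs). auto.
      + rewrite U0 in T. discriminate. }
  assert (PP: forall k x, p k = Some x -> gfun tau u (2*k) = 2 * f k).
  { induction k as [|k IH]; intros y Ey.
    - simpl. rewrite Hf0. auto.
    - destruct (p k) as [x|] eqn:Ex.
      2:{ rewrite (HpN k Ex) in Ey. discriminate. }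
      pose proof (Hst k x y Ex Ey) as Hs.
      specialize (QQ k x y Ex Ey (IH x eq_refl)).
      replace (2 * S k) with (S (S (2*k))) by lia.
      assert (U1: u (S (2*k)) = Some (inr (acts k))) by (unfold u; rewrite cs_odd, Ey; auto).
      assert (U2: u (S (S (2*k))) = Some (inl C)).
      { unfold u. replace (S (S (2*k))) with (2 * S k) by lia. rewrite cs_even, Ey. auto. }
      destruct (classic (L x = L y)) as [E|E].
      + rewrite gfun_t. rewrite (proj1 QQ E).
        rewrite (Hf1 k); [lia|]. rewrite Ex, Ey. simpl. rewrite E. auto.
        right. rewrite U1. apply (proj1 (Hc1 _ _ _ Hs)) in E. rewrite E. auto.
      + rewrite gfun_n. rewrite (proj2 QQ E).
        rewrite (Hf2 k); [lia|]. rewrite Ex, Ey. simpl. intro E'. apply E. injection E'. auto.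
        intros [T|T]. rewrite U2 in T; discriminate.
        rewrite U1 in T. injection T; intros T'. apply E. apply (Hc1 _ _ _ Hs). auto. }
  exists (gfun tau u). split; [reflexivity|]. split; [intros; apply gfun_t; auto|].
  split; [intros; apply gfun_n; auto|].
  intros j z. split.
  - intros Hz. destruct (Nat.Even_or_Odd j) as [[m ->]|[m ->]].
    + rewrite Phi_even in Hz. destruct (w m) as [l|] eqn:Ew; [|discriminate].
      injection Hz; intros <-.
      apply Hf4 in Ew. destruct Ew as [k [Hk Hv]].
      destruct (p k) as [x|] eqn:Ex; [|discriminate].
      exists (2*k). split; [rewrite (PP k x Ex); lia|]. split; [|discriminate].
      unfold u. rewrite cs_even, Ex. auto.
    + replace (2*m+1) with (S (2*m)) in * by lia. rewrite Phi_odd in Hz.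
      destruct (w m) as [l1|] eqn:E1; [|discriminate].
      destruct (w (S m)) as [l2|] eqn:E2; [|discriminate].
      injection Hz; intros <-.
      destruct (stut_step p w f HpN Hf0 Hf1 Hf2 Hf4 m l2 E2) as [k [x [y [Hk [Hk' [Ex [Ey [Hwm [Hl2 Hne]]]]]]]]].
      rewrite E1 in Hwm. injection Hwm; intros ->. subst l2.
      pose proof (Hst k x y Ex Ey) as Hs.
      rewrite (pick_spec _ _ _ Hs).
      exists (S (2*k)). split.
      * rewrite (proj2 (QQ k x y Ex Ey (PP k x Ex)) Hne). lia.
      * split. unfold u. rewrite cs_odd, Ey. auto.
        intro T. injection T; intros T'. apply Hne. apply (Hc1 _ _ _ Hs). auto.
  - intros [i [Hi [Hu Hz]]]. destruct (Nat.Even_or_Odd i) as [[k ->]|[k ->]].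
    + unfold u in Hu. rewrite cs_even in Hu. destruct (p k) as [x|] eqn:Ex; [|discriminate].
      injection Hu; intros <-. rewrite (PP k x Ex) in Hi. subst j.
      rewrite Phi_even. assert (w (f k) = Some (L x)) as ->.
      { apply Hf4. exists k. rewrite Ex. auto. }
      auto.
    + replace (2*k+1) with (S (2*k)) in * by lia.
      unfold u in Hu. rewrite cs_odd in Hu. destruct (p (S k)) as [y|] eqn:Ey; [|discriminate].
      injection Hu; intros <-.
      destruct (p k) as [x|] eqn:Ex.
      2:{ rewrite (HpN k Ex) in Ey. discriminate. }
      pose proof (Hst k x y Ex Ey) as Hs.
      assert (Hne: L x <> L y).
      { intro E. apply Hz. apply (Hc1 _ _ _ Hs) in E. rewrite E. auto. }
      rewrite (proj2 (QQ k x y Ex Ey (PP k x Ex)) Hne) in Hi. subst j.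
      assert (Hfs: f (S k) = S (f k)).
      { apply Hf2. rewrite Ex, Ey. simpl. intro E. apply Hne. injection E. auto. }
      rewrite Phi_odd.
      assert (w (f k) = Some (L x)) as ->.
      { apply Hf4. exists k. rewrite Ex. auto. }
      assert (w (S (f k)) = Some (L y)) as ->.
      { apply Hf4. exists (S k). rewrite Ey. auto. }
      rewrite (pick_spec _ _ _ Hs). auto.
Qed.

Lemma inj s1 s2 p1 p2 w1 w2 : kripke_maxpath step s1 p1 -> kripke_maxpath step s2 p2 ->
  label_trace L p1 w1 -> label_trace L p2 w2 -> L s1 = L s2 -> Phi w1 = Phi w2 -> w1 = w2.
Proof.
  intros K1 K2 T1 T2 HL HP.
  pose proof (L0 p1 s1 w1 (proj1 K1) T1) as Z1.
  pose proof (L0 p2 s2 w2 (proj1 K2) T2) as Z2.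
  destruct K1 as [_ [N1 [S1 _]]]. destruct K2 as [_ [N2 [S2 _]]].
  destruct T1 as [f1 [A1 [B1 [C1 D1]]]]. destruct T2 as [f2 [A2 [B2 [C2 D2]]]].
  apply functional_extensionality. intros m. induction m as [|m IH].
  - rewrite Z1, Z2, HL. auto.
  - pose proof (f_equal (fun F => F (2 * S m)) HP) as Ev. cbv beta in Ev.
    rewrite !Phi_even in Ev.
    destruct (w1 (S m)) as [l1|] eqn:E1; destruct (w2 (S m)) as [l2|] eqn:E2;
      try discriminate; auto.
    destruct (stut_step p1 w1 f1 N1 A1 B1 C1 D1 m l1 E1) as [k1 [x1 [y1 [_ [_ [Ex1 [Ey1 [Hw1 [Hl1 _]]]]]]]]].
    destruct (stut_step p2 w2 f2 N2 A2 B2 C2 D2 m l2 E2) as [k2 [x2 [y2 [_ [_ [Ex2 [Ey2 [Hw2 [Hl2 _]]]]]]]]].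
    subst l1 l2.
    rewrite Hw1, Hw2 in IH. injection IH; intros Exx.
    destruct (S1 k1 x1 y1 Ex1 Ey1) as [b1 Hb1].
    destruct (S2 k2 x2 y2 Ex2 Ey2) as [b2 Hb2].
    pose proof (f_equal (fun F => F (S (2 * m))) HP) as Ev2. cbv beta in Ev2.
    rewrite !Phi_odd, Hw1, Hw2, E1, E2 in Ev2.
    rewrite (pick_spec _ _ _ Hb1), (pick_spec _ _ _ Hb2) in Ev2.
    injection Ev2; intros ->.
    destruct Hc as [_ [H2 _]]. rewrite (H2 _ _ _ _ _ Hb1 Hb2 Exx). auto.
Qed.

Definition nxt (x : St) : option St :=
  match excluded_middle_informative (exists y, kr step x y) with
  | left H => Some (proj1_sig (constructive_indefinite_description _ H))
  | right _ => None end.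

Fixpoint kpath (s : St) (k : nat) : option St :=
  match k with 0 => Some s | S k => match kpath s k with Some x => nxt x | None => None end end.

Lemma kpath_max s : kripke_maxpath step s (kpath s).
Proof.
  split; [reflexivity|]. split; [intros k H; simpl; rewrite H; auto|].
  split.
  - intros k x y Hx Hy. simpl in Hy. rewrite Hx in Hy. unfold nxt in Hy.
    destruct (excluded_middle_informative _) as [H|H]; [|discriminate].
    destruct (constructive_indefinite_description _ H) as [y' Hy']. simpl in Hy.
    injection Hy; intros <-. auto.
  - intros k x Hx Hy y Hk. simpl in Hy. rewrite Hx in Hy. unfold nxt in Hy.
    destruct (excluded_middle_informative _) as [H|H]; [discriminate|]. apply H. eauto.
Qed.

Lemma acts_exist s p : kripke_maxpath step s p -> exists acts, lts_maxpath step s p acts.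
Proof.
  intros [H0 [H1 [H2 H3]]].
  exists (fun k => epsilon (inhabits tau)
    (fun a => exists x y, p k = Some x /\ p (S k) = Some y /\ step x a y)).
  split; auto. split; auto. split.
  - intros k x y Ex Ey.
    destruct (epsilon_spec (inhabits tau)
      (fun a => exists x y, p k = Some x /\ p (S k) = Some y /\ step x a y)) as [x' [y' [A [B Cc]]]].
    { destruct (H2 k x y Ex Ey) as [b Hb]. exists b, x, y. auto. }
    congruence.
  - intros k x Ex Ey a y Hs. apply (H3 k x Ex Ey y). exists a. auto.
Qed.

Lemma lts_kripke s p acts : lts_maxpath step s p acts -> kripke_maxpath step s p.
Proof.
  intros [H0 [H1 [H2 H3]]]. split; auto. split; auto. split.
  - intros k x y Ex Ey. exists (acts k). auto.
  - intros k x Ex Ey y [a Ha]. exact (H3 k x Ex Ey a y Ha).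
Qed.

Lemma dir1 s t w' : approx_L L step s t -> complete_T_traces tau step s w' ->
  complete_T_traces tau step t w'.
Proof.
  intros H [p [acts [Hl Htc]]].
  destruct (stut_exists (fun k => option_map L (p k))) as [w Hw].
  pose proof (D s p acts w Hl Hw) as HD.
  rewrite (tc_det tau _ _ _ Htc HD).
  destruct (proj1 (H w)) as [q [Hq Hwq]].
  { exists p. split; auto. eapply lts_kripke; eauto. }
  destruct (acts_exist t q Hq) as [acts' Ha].
  exists q, acts'. split; auto. eapply D; eauto.
Qed.

Lemma dir2 s t w : L s = L t ->
  (forall w', complete_T_traces tau step s w' <-> complete_T_traces tau step t w') ->
  label_traces L step s w -> label_traces L step t w.
Proof.
  intros HL HT [p [Hk Hw]].
  destruct (acts_exist s p Hk) as [acts Ha].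
  pose proof (D s p acts w Ha Hw) as HD.
  destruct (proj1 (HT (Phi w))) as [q [acts' [Hl' Htc']]].
  { exists p, acts. auto. }
  pose proof (lts_kripke _ _ _ Hl') as Kq.
  destruct (stut_exists (fun k => option_map L (q k))) as [w2 Hw2].
  pose proof (D t q acts' w2 Hl' Hw2) as HD2.
  pose proof (tc_det tau _ _ _ Htc' HD2) as Eq.
  assert (w2 = w) as <-.
  { apply (inj t s q p w2 w Kq Hk Hw2 Hw); auto. }
  exists q. auto.
Qed.

Lemma main s t : approx_L L step s t <-> eqT_lambda tau L step s t.
Proof.
  split.
  - intros H. split.
    + destruct (stut_exists (fun k => option_map L (kpath s k))) as [w Hw].
      destruct (proj1 (H w)) as [q [Hq Hwq]].
      { exists (kpath s). split; auto. apply kpath_max. }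
      pose proof (L0 _ _ _ (proj1 (kpath_max s)) Hw) as Z1.
      pose proof (L0 _ _ _ (proj1 Hq) Hwq) as Z2.
      congruence.
    + intros w'. split; apply dir1; auto.
      intros w; symmetry; apply H.
  - intros [HL HT] w. split; apply dir2; auto.
    intros w'; symmetry; apply HT.
Qed.

End Pf.

Theorem theorem9p2 (S Act AP : Type) (tau : Act) (L : S -> (AP -> Prop))
  (step : S -> Act -> S -> Prop) :
  consistent tau L step ->
  forall s t : S, approx_L L step s t <-> eqT_lambda tau L step s t.
Proof.
  intros Hc s t. exact (main S Act AP tau L step Hc s t).
Qed.
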